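(* Let $D\ge 2$ and $\eta=\mathrm{diag}(-1,1,\dots,1)$. Let $g_{\mu\nu}$ and $f_{\mu\nu}$ be two real symmetric invertible $D\times D$ matrices of Lorentzian signature $(-,+,\dots,+)$ (the two metrics at a point). Let $L^A{}_\mu$ be any real matrix with $\eta_{AB}L^A{}_\mu L^B{}_\nu=f_{\mu\nu}$, and let $e_A{}^\mu$ be any real matrix with $\eta^{AB}e_A{}^\mu e_B{}^\nu=g^{\mu\nu}$ (where $g^{\mu\nu}$ is the inverse of $g_{\mu\nu}$). Define the matrix $M$ with components $M^{AB}=e^{A\mu}L^B{}_\mu$, where $e^{A\mu}=\eta^{AC}e_C{}^\mu$. Then $g^{-1}f$ has a real square root $\gamma$ of the form $\gamma=f^{-1}s$ with $s$ a real symmetric matrix if and only if the real matrix $\eta M^t\eta M$ has a real square root which can be written as the product of $\eta$ with a real symmetric matrix.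
   Context: Greek indices are space-time indices and capital Latin indices are Lorentz indices, moved with $\eta_{AB}$; repeated indices are summed. $m^t$ denotes transpose; a square root of $A$ is a matrix $\gamma$ with $\gamma^2=A$. The matrix $M$ is invertible. *)

(* Defs.v *)
From HB Require Import structures.
From mathcomp Require Import all_boot all_order all_algebra.
From mathcomp Require Import reals.
Set Implicit Arguments. Unset Strict Implicit. Unset Printing Implicit Defensive.
Import Order.TTheory GRing.Theory Num.Theory.
Local Open Scope ring_scope.

(* Minkowski metric eta = diag(-1,1,...,1) of size D (index 0 is the time index). *)
Definition eta_mx (R : realType) (D : nat) : 'M[R]_D :=
  \matrix_(i < D, j < D) (if i == j then (if nat_of_ord i == 0%N then -1 else 1) else 0).

Definition sym_mx (R : realType) (D : nat) (A : 'M[R]_D) : Prop := A^T = A.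

(* Lorentzian signature (-,+,...,+): by Sylvester's law, the symmetric matrix g
   is congruent to eta, i.e. P^T g P = eta for some invertible real P. *)
Definition lorentzian (R : realType) (D : nat) (g : 'M[R]_D) : Prop :=
  sym_mx g /\ exists P : 'M[R]_D, P \in unitmx /\ P^T *m g *m P = eta_mx R D.

Definition is_sqrt_mx (R : realType) (D : nat) (gam A : 'M[R]_D) : Prop :=
  gam *m gam = A.

(* Main.v *)
Require Import Defs.
From HB Require Import structures.
From mathcomp Require Import all_boot all_order all_algebra.
From mathcomp Require Import reals.
Import Order.TTheory GRing.Theory Num.Theory.
Local Open Scope ring_scope.

(* Matrices: L has rows indexed by Lorentz index A, columns by space-time index mu
   (L A mu = L^A_mu); e A mu = e_A^mu.  Then
   eta_{AB} L^A_mu L^B_nu = f_{mu nu}   <->  L^T eta L = f,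
   eta^{AB} e_A^mu e_B^nu = g^{mu nu}   <->  e^T eta e = g^{-1},
   M^{AB} = eta^{AC} e_C^mu L^B_mu      <->  M = eta e L^T. *)

Lemma eta_diag (R : realType) (D : nat) :
  eta_mx R D = diag_mx (\row_(i < D) (if nat_of_ord i == 0%N then -1 else 1 : R)).
Proof. by apply/matrixP=> i j; rewrite !mxE eq_sym; case: eqP => // ->. Qed.

Lemma etaE2 (R : realType) (D : nat) : eta_mx R D *m eta_mx R D = 1%:M.
Proof.
rewrite eta_diag mulmx_diag; apply/matrixP=> i j; rewrite !mxE.
by case: (_ == _); rewrite ?mulrNN mulr1 // eq_sym.
Qed.

Lemma etaT (R : realType) (D : nat) : (eta_mx R D)^T = eta_mx R D.
Proof. by rewrite eta_diag tr_diag_mx. Qed.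

Lemma canc_r {R : realType} {D : nat} {X A B : 'M[R]_D} :
  A *m B = 1%:M -> X *m A *m B = X.
Proof. by move=> h; rewrite -mulmxA h mulmx1. Qed.

Lemma canc_l (R : realType) (D : nat) (A B : 'M[R]_D) :
  A *m B = 1%:M -> A *m B = 1%:M.
Proof. by []. Qed.

Theorem proposition2 (R : realType) (D : nat) (hD : (2 <= D)%N)
    (g f L e : 'M[R]_D)
    (hgsym : sym_mx g) (hfsym : sym_mx f)
    (hginv : g \in unitmx) (hfinv : f \in unitmx)
    (hglor : lorentzian g) (hflor : lorentzian f)
    (hL : L^T *m eta_mx R D *m L = f)
    (he : e^T *m eta_mx R D *m e = invmx g) :
  let M := eta_mx R D *m e *m L^T in
  (exists gam : 'M[R]_D, is_sqrt_mx gam (invmx g *m f) /\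
     exists s : 'M[R]_D, sym_mx s /\ gam = invmx f *m s)
  <->
  (exists rho : 'M[R]_D,
     is_sqrt_mx rho (eta_mx R D *m M^T *m eta_mx R D *m M) /\
     exists S : 'M[R]_D, sym_mx S /\ rho = eta_mx R D *m S).
Proof.
move=> M.
set E := eta_mx R D.
have EE : E *m E = 1%:M by exact: etaE2.
have ET : E^T = E by exact: etaT.
have Lu : L \in unitmx.
  have : f \in unitmx by [].
  by rewrite -hL !unitmx_mul => /andP[_ ->].
set Li := invmx L.
have LLi : L *m Li = 1%:M by rewrite mulmxV.
have LiL : Li *m L = 1%:M by rewrite mulVmx.
have LiLT : Li^T *m L^T = 1%:M by rewrite -trmx_mul LLi trmx1.
have fi : f *m invmx f = 1%:M by rewrite mulmxV.
have if_ : invmx f *m f = 1%:M by rewrite mulVmx.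
have giT : (invmx g)^T = invmx g by rewrite trmx_inv hgsym.
have key : E *m M^T *m E *m M = E *m L *m invmx g *m L^T.
  rewrite /M !trmx_mul ET trmxK !mulmxA (canc_r EE).
  by rewrite -he !mulmxA.
have LiF : L *m invmx f = E *m Li^T.
  have h : E *m Li^T *m f = L.
    by rewrite -hL !mulmxA (canc_r LiLT) EE mul1mx.
  by rewrite -h (canc_r fi).
have fLi : f *m Li *m E = L^T.
  by rewrite -hL (canc_r LLi) (canc_r EE).
split.
- move=> [gam [hg [s [hs hgs]]]].
  exists (E *m L *m gam *m Li *m E); split.
    rewrite /is_sqrt_mx key !mulmxA (canc_r EE) (canc_r LiL).
    by rewrite -(mulmxA _ gam gam) hg -fLi !mulmxA.
  exists (L *m gam *m Li *m E); split; last by rewrite !mulmxA.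
  have -> : L *m gam *m Li *m E = E *m Li^T *m s *m Li *m E.
    by rewrite hgs mulmxA LiF.
  by rewrite /sym_mx !trmx_mul ET trmxK hs !mulmxA.
- move=> [rho [hr [S [hS hrS]]]].
  exists (Li *m E *m rho *m E *m L); split.
    rewrite /is_sqrt_mx !mulmxA (canc_r LLi) (canc_r EE).
    rewrite -(mulmxA _ rho rho) hr key !mulmxA (canc_r EE) LiL mul1mx.
    by rewrite -hL !mulmxA.
  exists (L^T *m E *m S *m E *m L); split.
    by rewrite /sym_mx !trmx_mul ET trmxK hS !mulmxA.
  have -> : L^T *m E *m S *m E *m L = f *m (Li *m E *m rho *m E *m L).
    by rewrite hrS -hL !mulmxA (canc_r LLi) (canc_r EE).
  by rewrite mulmxA if_ mul1mx.
Qed.
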